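(* Under Total Store Order, in the limit $m\to\infty$: $\Pr[L_0]=1/3$, and for every integer $\mu>0$, $\Pr[L_\mu]\ge \tfrac{4}{7}\cdot 2^{-\mu}$.
   Context: Fix $m\ge 1$. A random program is a sequence $x_1,\dots,x_{m+2}$ of memory operations, each with a type in $\{\mathrm{LD},\mathrm{ST}\}$: $x_1,\dots,x_m$ have i.i.d. types, each $\mathrm{ST}$ with probability $1/2$ and $\mathrm{LD}$ with probability $1/2$; $x_{m+1}$ (the critical load) has type $\mathrm{LD}$ and $x_{m+2}$ (the critical store) has type $\mathrm{ST}$. The initial order is $S_0=(x_1,\dots,x_{m+2})$. A memory model is specified by the set of ordered type pairs $(\tau_1,\tau_2)$ for which an instruction of type $\tau_2$ may be moved ahead of an immediately preceding instruction of type $\tau_1$: Sequential Consistency (SC) allows no pair; Total Store Order (TSO) allows only the pair $(\mathrm{ST},\mathrm{LD})$ (a load may move ahead of a preceding store); Weak Ordering (WO) allows all four pairs. The settling process runs rounds $r=1,\dots,m+2$. Before round $r$, the current order $S_{r-1}$ consists of $x_1,\dots,x_{r-1}$ in some order in positions $1,\dots,r-1$, followed by $x_r,\dots,x_{m+2}$ in positions $r,\dots,m+2$. In round $r$, instruction $x_r$ (starting at position $r$) repeatedly attempts to swap with the instruction immediately preceding it in the current order: the attempt fails automatically if the pair (type of the preceding instruction, type of $x_r$) is not allowed by the memory model, or if $x_r$ is the critical store and the preceding instruction is the critical load; otherwise the attempt succeeds independently with probability $1/2$. The round ends when an attempt fails or $x_r$ reaches position $1$; the resulting order is $S_r$. For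 an integer $\mu\ge 0$ with $\mu<m$, $L_\mu$ is the event that in the order $S_m$ (the order just before the critical load is settled) the instructions at positions $m-\mu+1,\dots,m$ all have type $\mathrm{ST}$ and the instruction at position $m-\mu$ has type $\mathrm{LD}$; i.e. exactly $\mu$ stores immediately precede the critical load in $S_m$. *)

(* Defs.v *)
From Stdlib Require Import Reals List Bool Arith.
Import ListNotations.
Open Scope R_scope.

Inductive typ := LD | ST.
Definition is_LD (t : typ) : bool := match t with LD => true | ST => false end.
Definition is_ST (t : typ) : bool := match t with ST => true | LD => false end.

(* Instructions: x_1..x_m are Reg, x_{m+1} critical load, x_{m+2} critical store. *)
Inductive instr := Reg (t : typ) | CritLoad | CritStore.
Definition typ_of (i : instr) : typ :=
  match i with Reg t => t | CritLoad => LD | CritStore => ST end.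

(* A memory model: allowed (tau1, tau2): tau2 may move ahead of a preceding tau1. *)
Definition model := typ -> typ -> bool.
Definition SC : model := fun _ _ => false.
Definition TSO : model := fun a b => match a, b with ST, LD => true | _, _ => false end.
Definition WO : model := fun _ _ => true.

Definition dist (A : Type) := list (R * A).
Definition ret {A} (a : A) : dist A := [(1, a)].
Definition bind {A B} (d : dist A) (f : A -> dist B) : dist B :=
  flat_map (fun pa => map (fun qb => (fst pa * fst qb, snd qb)) (f (snd pa))) d.
Definition coin {A} (d1 d2 : dist A) : dist A :=
  map (fun pa => (fst pa / 2, snd pa)) d1 ++ map (fun pa => (fst pa / 2, snd pa)) d2.
Definition prob {A} (d : dist A) (P : A -> bool) : R :=
  fold_right (fun pa acc => (if P (snd pa) then fst pa else 0) + acc) 0 d.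

Fixpoint swap_at (k : nat) (s : list instr) : list instr :=
  match k, s with
  | O, a :: b :: t => b :: a :: t
  | S k', a :: t => a :: swap_at k' t
  | _, _ => s
  end.

Definition can_swap (M : model) (prev cur : instr) : bool :=
  M (typ_of prev) (typ_of cur) &&
  negb (match prev, cur with CritLoad, CritStore => true | _, _ => false end).

(* One round: the instruction at 0-based index k repeatedly attempts to swap
   with its predecessor; automatic failure if not allowed, otherwise success
   with probability 1/2; the round ends on failure or at position 1. *)
Fixpoint settle (M : model) (k : nat) (s : list instr) : dist (list instr) :=
  match k with
  | O => ret s
  | S k' =>
      if can_swap M (nth k' s CritLoad) (nth k s CritLoad)
      then coin (ret s) (settle M k' (swap_at k' s))
      else ret s
  end.

(* Rounds r = 1..n (round r settles x_r, which sits at 0-based index r-1). *)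
Fixpoint run (M : model) (n : nat) (s : list instr) : dist (list instr) :=
  match n with
  | O => ret s
  | S n' => bind (run M n' s) (settle M n')
  end.

Fixpoint progs (m : nat) : dist (list typ) :=
  match m with
  | O => ret []
  | S m' => bind (progs m') (fun p => coin (ret (p ++ [LD])) (ret (p ++ [ST])))
  end.

Definition init (p : list typ) : list instr := map Reg p ++ [CritLoad; CritStore].

Definition S_m (M : model) (m : nat) : dist (list instr) :=
  bind (progs m) (fun p => run M m (init p)).

(* Event L_mu (requires mu < m): positions m-mu+1..m (1-based) are ST and
   position m-mu is LD, in S_m. *)
Definition L_event (m mu : nat) (s : list instr) : bool :=
  Nat.ltb mu m &&
  forallb (fun j => is_ST (typ_of (nth j s CritLoad))) (seq (m - mu) mu) &&
  is_LD (typ_of (nth (m - mu - 1) s CritLoad)).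

Definition Pr_L (M : model) (m mu : nat) : R := prob (S_m M m) (L_event m mu).

(* Main.v *)
Require Import Defs.
From Stdlib Require Import Reals Lra Lia List Arith Bool.
Import ListNotations.
Open Scope R_scope.


Definition expect {A} (d : Defs.dist A) (g : A -> R) : R :=
  fold_right (fun pa acc => fst pa * g (snd pa) + acc) 0 d.

Lemma expect_app {A} (d1 d2 : Defs.dist A) g : expect (d1 ++ d2) g = expect d1 g + expect d2 g.
Proof. induction d1 as [|a t IH]; simpl; [ring|rewrite IH; ring]. Qed.

Lemma expect_ret {A} (a : A) g : expect (ret a) g = g a.
Proof. unfold ret, expect; simpl; ring. Qed.

Lemma expect_half {A} (d : Defs.dist A) g :
  expect (map (fun pa => (fst pa / 2, snd pa)) d) g = expect d g / 2.
Proof. induction d as [|a t IH]; simpl; [field|rewrite IH; field]. Qed.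

Lemma expect_coin {A} (d1 d2 : Defs.dist A) g :
  expect (coin d1 d2) g = (expect d1 g + expect d2 g) / 2.
Proof. unfold coin. rewrite expect_app, !expect_half. field. Qed.

Lemma expect_mulmap {A} (e : Defs.dist A) p g :
  expect (map (fun qb => (p * fst qb, snd qb)) e) g = p * expect e g.
Proof. induction e as [|a t IH]; simpl; [ring|rewrite IH; ring]. Qed.

Lemma expect_bind {A B} (d : Defs.dist A) (f : A -> Defs.dist B) g :
  expect (bind d f) g = expect d (fun a => expect (f a) g).
Proof.
  unfold bind. induction d as [|a t IH]; simpl; [reflexivity|].
  rewrite expect_app, expect_mulmap, IH. reflexivity.
Qed.

Lemma expect_ext_in {A} (d : Defs.dist A) g g' :
  (forall pa, In pa d -> g (snd pa) = g' (snd pa)) -> expect d g = expect d g'.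
Proof.
  induction d as [|a t IH]; intros H; simpl; [reflexivity|].
  rewrite (H a (or_introl eq_refl)), IH; [reflexivity|].
  intros pa Hp; apply H; right; exact Hp.
Qed.

Lemma expect_lin {A} (d : Defs.dist A) c e f g :
  expect d (fun a => c * f a + e * g a) = c * expect d f + e * expect d g.
Proof. induction d as [|a t IH]; simpl; [ring|rewrite IH; ring]. Qed.

Lemma expect_minus {A} (d : Defs.dist A) f g :
  expect d (fun a => f a - g a) = expect d f - expect d g.
Proof. induction d as [|a t IH]; simpl; [ring|rewrite IH; ring]. Qed.

Lemma prob_expect {A} (d : Defs.dist A) P :
  prob d P = expect d (fun a => if P a then 1 else 0).
Proof.
  induction d as [|a t IH]; simpl; [reflexivity|].
  rewrite IH; destruct (P (snd a)); ring.
Qed.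

Fixpoint swapT (k : nat) (s : list typ) : list typ :=
  match k, s with
  | O, a :: b :: t => b :: a :: t
  | S k', a :: t => a :: swapT k' t
  | _, _ => s
  end.

Fixpoint settleT (k : nat) (l : list typ) : Defs.dist (list typ) :=
  match k with
  | O => ret l
  | S k' => if TSO (nth k' l LD) (nth k l LD)
            then coin (ret l) (settleT k' (swapT k' l)) else ret l
  end.

Fixpoint runT (n : nat) (l : list typ) : Defs.dist (list typ) :=
  match n with O => ret l | S n' => bind (runT n' l) (settleT n') end.

Lemma swap_map k s : map typ_of (swap_at k s) = swapT k (map typ_of s).
Proof.
  revert s; induction k; intros s; destruct s as [|a [|b t]]; simpl; auto;
    rewrite IHk; reflexivity.
Qed.

Lemma can_swap_TSO a b : can_swap TSO a b = TSO (typ_of a) (typ_of b).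
Proof. destruct a as [[]| |], b as [[]| |]; reflexivity. Qed.

Lemma nth_typ k s : typ_of (nth k s CritLoad) = nth k (map typ_of s) LD.
Proof. exact (eq_sym (map_nth typ_of s CritLoad k)). Qed.

Lemma settle_T k : forall s g,
  expect (settle TSO k s) (fun s' => g (map typ_of s')) = expect (settleT k (map typ_of s)) g.
Proof.
  induction k; intros s g; cbn [settle settleT].
  - rewrite !expect_ret; reflexivity.
  - rewrite can_swap_TSO, !nth_typ.
    destruct (TSO _ _).
    + rewrite !expect_coin, !expect_ret, IHk, swap_map. reflexivity.
    + rewrite !expect_ret; reflexivity.
Qed.

Lemma run_T n : forall s g,
  expect (run TSO n s) (fun s' => g (map typ_of s')) = expect (runT n (map typ_of s)) g.
Proof.
  induction n; intros s g; cbn [run runT].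
  - rewrite !expect_ret; reflexivity.
  - rewrite !expect_bind.
    rewrite (expect_ext_in _ _ (fun s' => (fun l => expect (settleT n l) g) (map typ_of s'))).
    + exact (IHn s (fun l => expect (settleT n l) g)).
    + intros pa _. apply settle_T.
Qed.

Lemma swapT_length k : forall l, length (swapT k l) = length l.
Proof. induction k; intros [|a [|b t]]; simpl; auto. Qed.

Lemma in_coin {A} (d1 d2 : Defs.dist A) pa :
  In pa (coin d1 d2) -> exists pb, snd pa = snd pb /\ (In pb d1 \/ In pb d2).
Proof.
  unfold coin; intros H. apply in_app_or in H.
  destruct H as [H|H]; apply in_map_iff in H; destruct H as [pb [<- Hb]];
    exists pb; simpl; auto.
Qed.

Lemma in_bind {A B} (d : Defs.dist A) (f : A -> Defs.dist B) pa :
  In pa (bind d f) -> exists pb pc, In pb d /\ In pc (f (snd pb)) /\ snd pa = snd pc.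
Proof.
  unfold bind; intros H. apply in_flat_map in H. destruct H as [pb [Hb Hc]].
  apply in_map_iff in Hc. destruct Hc as [pc [<- Hc]]. exists pb, pc; simpl; auto.
Qed.

Lemma settleT_len k : forall l pa, In pa (settleT k l) -> length (snd pa) = length l.
Proof.
  induction k; intros l pa H; simpl in H.
  - destruct H as [<-|[]]; reflexivity.
  - destruct (TSO _ _).
    + apply in_coin in H. destruct H as [pb [-> [H|H]]].
      * destruct H as [<-|[]]; reflexivity.
      * rewrite (IHk _ _ H). apply swapT_length.
    + destruct H as [<-|[]]; reflexivity.
Qed.

Lemma runT_len n : forall l pa, In pa (runT n l) -> length (snd pa) = length l.
Proof.
  induction n; intros l pa H; simpl in H.
  - destruct H as [<-|[]]; reflexivity.
  - apply in_bind in H. destruct H as [pb [pc [H1 [H2 ->]]]].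
    rewrite (settleT_len _ _ _ H2). apply (IHn _ _ H1).
Qed.

Lemma progs_len m : forall pa, In pa (progs m) -> length (snd pa) = m.
Proof.
  induction m; intros pa H; simpl in H.
  - destruct H as [<-|[]]; reflexivity.
  - apply in_bind in H. destruct H as [pb [pc [H1 [H2 ->]]]].
    apply in_coin in H2. destruct H2 as [pd [-> [H|H]]];
    destruct H as [<-|[]]; simpl; rewrite length_app, (IHm _ H1); simpl; lia.
Qed.

Lemma settleT_mass k : forall l, expect (settleT k l) (fun _ => 1) = 1.
Proof.
  induction k; intros l; cbn [settleT].
  - exact (expect_ret _ (fun _ => 1)).
  - destruct (TSO _ _); [rewrite expect_coin, expect_ret, IHk; field|exact (expect_ret _ (fun _ => 1))].
Qed.

Lemma runT_mass n : forall l, expect (runT n l) (fun _ => 1) = 1.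
Proof.
  induction n; intros l; cbn [runT].
  - exact (expect_ret _ (fun _ => 1)).
  - rewrite expect_bind. rewrite (expect_ext_in _ _ (fun _ => 1)); [apply IHn|].
    intros; apply settleT_mass.
Qed.

Lemma progs_mass m : expect (progs m) (fun _ => 1) = 1.
Proof.
  induction m; cbn [progs].
  - exact (expect_ret _ (fun _ => 1)).
  - rewrite expect_bind. rewrite (expect_ext_in _ _ (fun _ => 1)); [apply IHm|].
    intros; rewrite expect_coin, !expect_ret; field.
Qed.


Lemma cv_rec (x y : nat -> R) c ly : 0 <= c < 1 -> Un_cv y ly ->
  (forall n, x (S n) = c * x n + y n) -> Un_cv x (ly / (1 - c)).
Proof.
  intros [Hc0 Hc1] Hy Hx eps Heps.
  set (L := ly / (1 - c)).
  assert (HL : c * L + ly = L) by (unfold L; field; lra).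
  destruct (Hy (eps * (1 - c) / 2)) as [N1 HN1].
  { apply Rmult_lt_0_compat; [|lra]. apply Rmult_lt_0_compat; lra. }
  assert (Hk : forall k, Rabs (x (N1 + k)%nat - L) <= c ^ k * Rabs (x N1 - L) + eps / 2).
  { induction k.
    - rewrite Nat.add_0_r. simpl. lra.
    - replace (N1 + S k)%nat with (S (N1 + k)) by lia. rewrite Hx.
      specialize (HN1 (N1 + k)%nat ltac:(lia)). unfold R_dist in HN1.
      replace (c * x (N1 + k)%nat + y (N1 + k)%nat - L)
        with (c * (x (N1 + k)%nat - L) + (y (N1 + k)%nat - ly)) by (unfold L; field; lra).
      eapply Rle_trans; [apply Rabs_triang|].
      rewrite Rabs_mult, (Rabs_right c) by lra.
      assert (c * Rabs (x (N1 + k)%nat - L) <= c * (c ^ k * Rabs (x N1 - L) + eps / 2))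
        by (apply Rmult_le_compat_l; lra).
      simpl. nra. }
  set (A := Rabs (x N1 - L)).
  assert (HA : 0 <= A) by apply Rabs_pos.
  destruct (pow_lt_1_zero c ltac:(rewrite Rabs_right; lra) (eps / 2 / (A + 1)))
    as [N2 HN2].
  { apply Rdiv_lt_0_compat; lra. }
  exists (N1 + N2)%nat. intros n Hn. unfold R_dist.
  replace n with (N1 + (n - N1))%nat by lia.
  eapply Rle_lt_trans; [apply Hk|].
  specialize (HN2 (n - N1)%nat ltac:(lia)).
  assert (Hp : 0 <= c ^ (n - N1)) by (apply pow_le; lra).
  rewrite Rabs_right in HN2 by lra.
  assert (c ^ (n - N1) * (A + 1) < eps / 2).
  { apply (Rmult_lt_compat_r (A + 1)) in HN2; [|lra].
    replace (eps / 2 / (A + 1) * (A + 1)) with (eps / 2) in HN2 by (field; lra). exact HN2. }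
  fold A. nra.
Qed.

Lemma cv_const c : Un_cv (fun _ => c) c.
Proof. intros eps H. exists 0%nat. intros. unfold R_dist. rewrite Rminus_diag, Rabs_R0. exact H. Qed.

Lemma cv_eventually (a b : nat -> R) l N : Un_cv a l -> (forall n, (N <= n)%nat -> b n = a n) -> Un_cv b l.
Proof.
  intros Ha Hb eps He. destruct (Ha eps He) as [M HM]. exists (Nat.max N M). intros n Hn.
  rewrite Hb by lia. apply HM. lia.
Qed.


Lemma swapT_app k : forall l b, (S k < length l)%nat -> swapT k (l ++ b) = swapT k l ++ b.
Proof.
  induction k; intros l b H; destruct l as [|a [|c t]]; simpl in *; try lia; auto.
  rewrite <- (IHk (c :: t) b); [reflexivity|simpl; lia].
Qed.

Lemma settleT_tail k : forall l b g, (k < length l)%nat ->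
  expect (settleT k (l ++ b)) g = expect (settleT k l) (fun l' => g (l' ++ b)).
Proof.
  induction k; intros l b g H; cbn [settleT].
  - rewrite !expect_ret; reflexivity.
  - rewrite !app_nth1 by lia.
    destruct (TSO _ _).
    + rewrite !expect_coin, !expect_ret, swapT_app by lia.
      rewrite IHk; [reflexivity|rewrite swapT_length; lia].
    + rewrite !expect_ret; reflexivity.
Qed.

Lemma runT_tail n : forall l b g, (n <= length l)%nat ->
  expect (runT n (l ++ b)) g = expect (runT n l) (fun l' => g (l' ++ b)).
Proof.
  induction n; intros l b g H; cbn [runT].
  - rewrite !expect_ret; reflexivity.
  - rewrite !expect_bind. rewrite IHn by lia.
    apply expect_ext_in. intros pa Hp.
    apply settleT_tail. rewrite (runT_len _ _ _ Hp). lia.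
Qed.

Fixpoint tc (l : list typ) (n : nat) : nat :=
  match n with
  | O => O
  | S n' => match nth n' l LD with ST => S (tc l n') | LD => O end
  end.

Lemma tc_S l n : tc l (S n) = match nth n l LD with ST => S (tc l n) | LD => O end.
Proof. reflexivity. Qed.

Lemma tc_app n : forall l b, (n <= length l)%nat -> tc (l ++ b) n = tc l n.
Proof.
  induction n; intros l b H; [reflexivity|].
  rewrite !tc_S, app_nth1 by lia. rewrite IHn by lia. reflexivity.
Qed.

Lemma nth_middle2 {A} (l : list A) a b t d : nth (S (length l)) (l ++ a :: b :: t) d = b.
Proof. induction l; simpl; auto. Qed.

Lemma swapT_mid (l : list typ) a b t : swapT (length l) (l ++ a :: b :: t) = l ++ b :: a :: t.
Proof. induction l; simpl; [reflexivity|rewrite IHl; reflexivity]. Qed.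

Lemma tc_snoc l y b :
  tc (l ++ y :: b) (S (length l)) = match y with ST => S (tc l (length l)) | LD => O end.
Proof.
  rewrite tc_S, nth_middle. destruct y; auto. rewrite tc_app by lia. reflexivity.
Qed.

Definition hI (i : nat) (l : list typ) (n : nat) : R := if Nat.leb i (tc l n) then 1 else 0.

Lemma settle_ST l rest : settleT (length l) (l ++ ST :: rest) = ret (l ++ ST :: rest).
Proof.
  destruct l as [|a l0] using rev_ind; [reflexivity|].
  rewrite length_app. simpl. rewrite Nat.add_1_r. cbn [settleT].
  rewrite <- app_assoc. simpl.
  rewrite nth_middle2. destruct (nth _ _ _); reflexivity.
Qed.

Lemma LD_lem k : forall l rest i, length l = k ->
  expect (settleT k (l ++ LD :: rest)) (fun l' => hI i l' (S k)) =
  if Nat.eqb i 0 then 1 else if Nat.leb i (tc l k) then (1/2)^i else 0.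
Proof.
  induction k; intros l rest i Hl.
  - destruct l; [|discriminate]. cbn [settleT]. rewrite expect_ret.
    unfold hI. simpl. destruct i; reflexivity.
  - destruct l as [|y l0] using rev_ind; [discriminate|].
    rewrite length_app in Hl. simpl in Hl. assert (Hk : length l0 = k) by lia. subst k.
    cbn [settleT]. rewrite <- app_assoc. simpl (([y] ++ _)).
    rewrite nth_middle, nth_middle2.
    rewrite tc_snoc.
    destruct y; cbv iota beta delta [TSO].
    + rewrite expect_ret. unfold hI. rewrite tc_S, nth_middle2.
      destruct i; reflexivity.
    + rewrite expect_coin, expect_ret, swapT_mid.
      replace (l0 ++ LD :: ST :: rest) with ((l0 ++ [LD]) ++ ST :: rest)
        by (rewrite <- app_assoc; reflexivity).
      rewrite settleT_tail by (rewrite length_app; simpl; lia).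
      rewrite (expect_ext_in _ _ (fun l' => if Nat.leb i (S (tc l' (S (length l0)))) then 1 else 0)).
      2:{ intros pa Hp. pose proof (settleT_len _ _ _ Hp) as Hlen.
          rewrite length_app in Hlen; simpl in Hlen.
          unfold hI. rewrite tc_S.
          replace (S (length l0)) with (length (snd pa)) at 1 by lia.
          rewrite nth_middle. rewrite tc_app by lia. reflexivity. }
      unfold hI. rewrite tc_S, nth_middle2.
      destruct i as [|i'].
      * simpl. pose proof (settleT_mass (length l0) (l0 ++ [LD])) as M.
        rewrite M. field.
      * simpl Nat.leb at 1. simpl Nat.eqb.
        pose proof (IHk l0 [] i' eq_refl) as IH. unfold hI in IH.
        change (fun l' : list typ => if Nat.leb (S i') (S (tc l' (S (length l0)))) then 1 else 0)
          with (fun l' : list typ => if Nat.leb i' (tc l' (S (length l0))) then 1 else 0).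
        rewrite IH. destruct i' as [|i'']; simpl; [field|].
        destruct (tc l0 (length l0)) as [|t]; [simpl; field|]. destruct (Nat.leb i'' t); field.
Qed.


Lemma seq_tc n : forall l mu, (mu <= n)%nat ->
  forallb (fun j => is_ST (nth j l LD)) (seq (n - mu) mu) = Nat.leb mu (tc l n).
Proof.
  induction n; intros l mu H.
  - assert (mu = 0%nat) by lia; subst. reflexivity.
  - destruct mu as [|mu']; [reflexivity|].
    replace (S n - S mu')%nat with (n - mu')%nat by lia.
    rewrite seq_S, forallb_app, IHn by lia.
    replace (n - mu' + mu')%nat with n by lia.
    rewrite tc_S. simpl. destruct (nth n l LD); simpl.
    + apply andb_false_r.
    + rewrite andb_true_r. reflexivity.
Qed.

Lemma ld_tc n : forall l mu, (mu < n)%nat -> Nat.leb mu (tc l n) = true ->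
  Nat.leb (S mu) (tc l n) = is_ST (nth (n - mu - 1) l LD).
Proof.
  induction n; intros l mu H1 H2; [lia|].
  rewrite tc_S in *. destruct (nth n l LD) eqn:E.
  - destruct mu; [|discriminate]. simpl. replace (n - 0)%nat with n by lia. rewrite E. reflexivity.
  - destruct mu as [|mu'].
    + simpl. replace (n - 0)%nat with n by lia. rewrite E. reflexivity.
    + simpl in H2 |- *. apply IHn; [lia|exact H2].
Qed.

Lemma forallb_nth s L :
  forallb (fun j => is_ST (typ_of (nth j s CritLoad))) L =
  forallb (fun j => is_ST (nth j (map typ_of s) LD)) L.
Proof. induction L; simpl; [reflexivity|rewrite nth_typ, IHL; reflexivity]. Qed.

Definition LT (m mu : nat) (l : list typ) : bool :=
  Nat.ltb mu m &&
  forallb (fun j => is_ST (nth j l LD)) (seq (m - mu) mu) &&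
  is_LD (nth (m - mu - 1) l LD).

Lemma L_LT m mu s : L_event m mu s = LT m mu (map typ_of s).
Proof. unfold L_event, LT. rewrite forallb_nth, nth_typ. reflexivity. Qed.

Lemma init_typ p : map typ_of (init p) = p ++ [LD; ST].
Proof.
  unfold init. rewrite map_app, map_map. simpl. rewrite map_id. reflexivity.
Qed.

Definition U (m i : nat) : R :=
  expect (progs m) (fun p => expect (runT m p) (fun l => hI i l m)).

Lemma LT_ind m mu l : (mu < m)%nat -> length l = m ->
  (if LT m mu (l ++ [LD; ST]) then 1 else 0) = hI mu l m - hI (S mu) l m.
Proof.
  intros H Hl. unfold LT, hI.
  rewrite seq_tc by lia.
  rewrite tc_app by lia.
  assert (Hlt : Nat.ltb mu m = true) by (apply Nat.ltb_lt; exact H).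
  rewrite Hlt, andb_true_l.
  destruct (Nat.leb mu (tc l m)) eqn:E.
  - pose proof (ld_tc m (l ++ [LD; ST]) mu H) as K.
    rewrite tc_app in K by lia. specialize (K E). rewrite andb_true_l, K.
    destruct (nth (m - mu - 1) (l ++ [LD; ST]) LD); simpl; ring.
  - rewrite andb_false_l. destruct (Nat.leb (S mu) (tc l m)) eqn:E2; [|ring].
    apply Nat.leb_le in E2. apply Nat.leb_gt in E. lia.
Qed.

Lemma Pr_U m mu : (mu < m)%nat -> Pr_L TSO m mu = U m mu - U m (S mu).
Proof.
  intros H. unfold Pr_L, S_m, U. rewrite prob_expect, expect_bind, <- expect_minus.
  apply expect_ext_in. intros pa Hp. pose proof (progs_len _ _ Hp) as Hl.
  rewrite (expect_ext_in _ _ (fun s => (fun l => if LT m mu l then 1 else 0) (map typ_of s))).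
  2:{ intros; rewrite L_LT; reflexivity. }
  rewrite (run_T m (init (snd pa)) (fun l => if LT m mu l then 1 else 0)), init_typ, runT_tail by lia.
  rewrite <- expect_minus. apply expect_ext_in. intros pb Hb.
  apply LT_ind; [exact H|]. rewrite (runT_len _ _ _ Hb). exact Hl.
Qed.

Lemma U_0 m : U m 0 = 1.
Proof.
  unfold U, hI. simpl.
  rewrite (expect_ext_in _ _ (fun _ => 1)); [apply progs_mass|].
  intros; apply runT_mass.
Qed.

Lemma U_init j : U 0 (S j) = 0.
Proof. unfold U, hI. cbn. ring. Qed.

Lemma expect_avg {A} (d : Defs.dist A) f g :
  (expect d f + expect d g) / 2 = expect d (fun a => (f a + g a) / 2).
Proof. induction d as [|a t IH]; simpl; [field|rewrite <- IH; field]. Qed.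

Lemma U_rec m j : U (S m) (S j) = (1/2)^(S j) / 2 * U m (S j) + / 2 * U m j.
Proof.
  unfold U. rewrite <- expect_lin.
  cbn [progs]. rewrite expect_bind. apply expect_ext_in. intros pa Hp.
  pose proof (progs_len _ _ Hp) as Hl.
  rewrite expect_coin, !expect_ret. cbn [runT]. rewrite !expect_bind.
  rewrite !runT_tail by (rewrite ?Hl; lia).
  rewrite <- expect_lin, expect_avg. apply expect_ext_in. intros pb Hb.
  pose proof (runT_len _ _ _ Hb) as Hl2. rewrite Hl in Hl2.
  remember (snd pb) as l.
  rewrite <- Hl2. rewrite LD_lem by reflexivity.
  rewrite settle_ST, expect_ret. unfold hI. rewrite tc_snoc.
  simpl Nat.eqb. simpl Nat.leb at 2.
  destruct (Nat.leb (S j) (tc l (length l))) eqn:E1;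
  destruct (Nat.leb j (tc l (length l))) eqn:E2; try field.
Qed.


Lemma half_pow n : 0 < (1/2)^n <= 1.
Proof.
  induction n; simpl; [lra|]. split; [apply Rmult_lt_0_compat; lra|nra].
Qed.

Fixpoint V (j : nat) : R :=
  match j with O => 1 | S j' => (/2 * V j') / (1 - (1/2)^(S j') / 2) end.

Lemma U_cv j : Un_cv (fun m => U m j) (V j).
Proof.
  induction j.
  - apply (cv_eventually (fun _ => 1) _ _ 0); [apply cv_const|]. intros; apply U_0.
  - simpl V. apply cv_rec with (y := fun m => /2 * U m j).
    + pose proof (half_pow (S j)) as HH. simpl in HH. lra.
    + apply (CV_mult (fun _ => /2) (fun m => U m j)); [apply cv_const|exact IHj].
    + intros n. apply U_rec.
Qed.

Lemma V_pos j : 0 < V j.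
Proof.
  induction j; simpl V; [lra|]. pose proof (half_pow (S j)).
  apply Rdiv_lt_0_compat; [lra|]. simpl in *. lra.
Qed.

Lemma div_ge a d : 0 <= a -> 0 < d <= 1 -> a <= a / d.
Proof.
  intros Ha Hd. apply (Rmult_le_reg_r d); [lra|].
  replace (a / d * d) with a by (field; lra). nra.
Qed.

Lemma V_low mu : (1 <= mu)%nat -> V mu >= 4/3 * (1/2)^mu.
Proof.
  induction mu; intros H; [lia|].
  destruct mu.
  - simpl. apply Req_ge. field.
  - specialize (IHmu ltac:(lia)).
    change (V (S (S mu))) with ((/2 * V (S mu)) / (1 - (1/2)^(S (S mu)) / 2)).
    pose proof (half_pow (S (S mu))) as [H1 H2].
    set (q := (1/2)^(S (S mu))) in *.
    assert (Hq : q = 1/2 * (1/2)^(S mu)) by reflexivity.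
    assert (Hd : 0 < 1 - q / 2) by lra.
    pose proof (V_pos (S mu)).
    assert (/2 * V (S mu) <= (/2 * V (S mu)) / (1 - q/2)) by (apply div_ge; lra).
    apply Rle_ge. eapply Rle_trans; [|exact H3].
    change ((1/2)^(S (S mu))) with (1/2 * (1/2)^(S mu)). lra.
Qed.

Theorem lemma1 :
  Un_cv (fun m => Pr_L TSO m 0) (1 / 3) /\
  (forall mu : nat, (0 < mu)%nat ->
     exists l : R, Un_cv (fun m => Pr_L TSO m mu) l /\ l >= 4 / 7 * (1 / 2) ^ mu).
Proof.
  split.
  - replace (1/3) with (V 0 - V 1) by (simpl; field).
    apply (cv_eventually (fun m => U m 0 - U m 1) _ _ 1).
    + apply CV_minus; apply U_cv.
    + intros n Hn. apply Pr_U. lia.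
  - intros mu Hmu. exists (V mu - V (S mu)). split.
    + apply (cv_eventually (fun m => U m mu - U m (S mu)) _ _ (S mu)).
      * apply CV_minus; apply U_cv.
      * intros n Hn. apply Pr_U. lia.
    + change (V (S mu)) with ((/2 * V mu) / (1 - (1/2)^(S mu) / 2)).
      pose proof (V_low mu ltac:(lia)) as HV.
      pose proof (half_pow mu) as [H1 H2].
      assert (Hq : (1/2)^mu <= 1/2).
      { destruct mu; [lia|]. simpl. pose proof (half_pow mu). nra. }
      replace ((1/2)^(S mu)) with (1/2 * (1/2)^mu) by reflexivity.
      set (q := (1/2)^mu) in *.
      replace (V mu - / 2 * V mu / (1 - 1 / 2 * q / 2)) with (V mu * ((2 - q) / (4 - q)))
        by (field; lra).
      assert (Hr : (2 - q) / (4 - q) >= 3/7).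
      { apply Rle_ge. apply (Rmult_le_reg_r (4 - q)); [lra|].
        replace ((2 - q) / (4 - q) * (4 - q)) with (2 - q) by (field; lra). lra. }
      nra.
Qed.
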